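(* Let $Z_1,\dots,Z_d$ be nonzero complex numbers with $|Z_1|\le\cdots\le|Z_d|$, not all of the same modulus, let $R=\min\{|Z_{i+1}|/|Z_i| : |Z_{i+1}|>|Z_i|\}$ and $I=\{i: 1\le i\le d-1,\ |Z_i|<|Z_{i+1}|\}\cup\{0,d\}$. Then for every $i\in I$, \[ \sigma_{d-i}(Z)=Z_{i+1}Z_{i+2}\cdots Z_d\,(1+c) \] for some complex $c$ with $|c|\le\left(\binom{d}{i}-1\right)R^{-1}\le 2^dR^{-1}$.
   Context: $\sigma_k(Z)=\sum_{j_1<\dots<j_k}Z_{j_1}\cdots Z_{j_k}$ denotes the $k$-th elementary symmetric function of $Z=(Z_1,\dots,Z_d)$, with $\sigma_0=1$; an empty product equals $1$. *)

(* Defs.v *)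
From HB Require Import structures.
From mathcomp Require Import all_boot all_order all_algebra.
Unset Printing Implicit Defensive.
Import Order.TTheory GRing.Theory Num.Theory.
Local Open Scope ring_scope.

(* Convention: the paper's Z_1, ..., Z_d are Z 0, ..., Z (d-1) (0-based). *)

Definition elem_sym {C : numClosedFieldType} (d : nat) (Z : nat -> C) (k : nat) : C :=
  \sum_(S : {set 'I_d} | #|S| == k) \prod_(j in S) Z (val j).

Definition jump_ratios {C : numClosedFieldType} (d : nat) (Z : nat -> C) : seq C :=
  [seq `|Z j.+1| / `|Z j| | j <- iota 0 d.-1 & `|Z j| < `|Z j.+1|].

Definition min_ratio {C : numClosedFieldType} (d : nat) (Z : nat -> C) : C :=
  let s := jump_ratios d Z in \big[Order.min/head 0 s]_(r <- s) r.

(* The index set I (paper indexing): i = 0, i = d, or 1 <= i <= d-1 with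
   |Z_i| < |Z_{i+1}|, i.e. |Z (i-1)| < |Z i| in 0-based indexing. *)
Definition jump_index {C : numClosedFieldType} (d : nat) (Z : nat -> C) (i : nat) : bool :=
  (i == 0)%N || (i == d) || [&& (1 <= i)%N, (i <= d.-1)%N & `|Z i.-1| < `|Z i|].

(* Main.v *)
Require Import Defs.
From HB Require Import structures.
From mathcomp Require Import all_boot all_order all_algebra.
Import Order.TTheory GRing.Theory Num.Theory.
Local Open Scope ring_scope.

Lemma bin_le_exp (n k : nat) : ('C(n, k) <= 2 ^ n)%N.
Proof.
elim: n k => [|n IH] [|k]; rewrite ?bin0 ?expn_gt0 //.
- by rewrite binS expnS mul2n -addnn leq_add.
Qed.

Section MinR.
Variable C : numDomainType.

Lemma bigmin_pos (s : seq C) (x0 : C) : 0 < x0 -> (forall x, x \in s -> 0 < x) ->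
  0 < \big[Order.min/x0]_(r <- s) r.
Proof.
move=> h0 hs; elim: s hs => [|a s IH] hs; first by rewrite big_nil.
rewrite big_cons; have ha : 0 < a by apply: hs; rewrite mem_head.
have hb : 0 < \big[Order.min/x0]_(r <- s) r by apply: IH => x hx; apply: hs; rewrite inE hx orbT.
by rewrite /Order.min; case: ifP.
Qed.

Lemma bigmin_le (s : seq C) (x0 : C) : 0 < x0 -> (forall x, x \in s -> 0 < x) ->
  forall x, x \in s -> \big[Order.min/x0]_(r <- s) r <= x.
Proof.
move=> h0 hs x; elim: s hs => [|a s IH] hs //.
rewrite big_cons inE; have ha : 0 < a by apply: hs; rewrite mem_head.
have hs' : forall y, y \in s -> 0 < y by move=> y hy; apply: hs; rewrite inE hy orbT.
have hb := @bigmin_pos s x0 h0 hs'.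
have ra : a \is Num.real by apply: gtr0_real.
have rb : \big[Order.min/x0]_(r <- s) r \is Num.real by apply: gtr0_real.
rewrite /Order.min; case/orP => [/eqP -> | hx].
- case: ifP => // /negbT; rewrite real_ltNge // negbK //.
- have := IH hs' hx; case: ifP => // hlt hle.
  exact: le_trans (ltW hlt) hle.
Qed.
End MinR.


Lemma key (C : numClosedFieldType) (d : nat) (Z : nat -> C)
  (hnz : forall j, (j < d)%N -> Z j != 0)
  (hsort : forall j k, (j <= k)%N -> (k < d)%N -> `|Z j| <= `|Z k|)
  (i : nat) (hji : jump_index d Z i) (S : {set 'I_d})
  (hS : #|S| = #|[set j : 'I_d | (i <= j)%N]|) (hne : S != [set j : 'I_d | (i <= j)%N]) :
  `|\prod_(j in S) Z (val j)| <= (min_ratio d Z)^-1 * `|\prod_(j in [set j : 'I_d | (i <= j)%N]) Z (val j)|.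
Proof.
set T := [set j : 'I_d | (i <= j)%N] in hS hne *.
have [a aS aT] : exists2 a, a \in S & a \notin T.
  apply/subsetPn; apply: contra hne => sub.
  by apply/eqP/setP; apply/subset_cardP.
have [b bT bS] : exists2 b, b \in T & b \notin S.
  apply/subsetPn; apply: contra hne => sub.
  by rewrite eq_sym; apply/eqP/setP; apply/subset_cardP.
move: aT bT; rewrite !inE -ltnNge => ai ib.
have i0 : (0 < i)%N by apply: leq_ltn_trans ai.
have bd := ltn_ord b.
have id1 : (i <= d.-1)%N by rewrite -ltnS prednK ?(leq_ltn_trans _ bd) //; exact: leq_trans ib bd.
have hjump : `|Z i.-1| < `|Z i|.
  move: hji; rewrite /jump_index => /orP[/orP[/eqP i0'|/eqP id']|/and3P[_ _ //]].
  - by rewrite i0' in i0.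
  - by rewrite id' in ib; rewrite ltnNge ib in bd.
set m := `|Z i.-1|; set M := `|Z i|.
have id : (i < d)%N by exact: leq_ltn_trans ib bd.
have i1d : (i.-1 < d)%N by rewrite (leq_ltn_trans _ id) // leq_pred.
have m0 : 0 < m by rewrite normr_gt0 hnz.
have M0 : 0 < M by rewrite normr_gt0 hnz.
have hmem : M / m \in jump_ratios d Z.
  rewrite /jump_ratios; apply/mapP; exists i.-1; last by rewrite prednK.
  rewrite mem_filter mem_iota add0n prednK //.
  by rewrite hjump /= -ltnS prednK // (leq_trans _ id) // prednK.
have hpos : forall x, x \in jump_ratios d Z -> 0 < x.
  move=> x /mapP [j]; rewrite mem_filter mem_iota => /andP[hlt /andP[_ hj]] ->.
  have jd : (j < d)%N by rewrite add0n in hj; exact: leq_trans hj (leq_pred _).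
  rewrite divr_gt0 // ?normr_gt0 ?hnz //.
  by move: hj; rewrite add0n ltn_predRL.
have [hR hRle] : 0 < min_ratio d Z /\ min_ratio d Z <= M / m.
  rewrite /min_ratio; move: hmem hpos; case: (jump_ratios d Z) => [//|y s] hmem hpos /=.
  have y0 : 0 < y by apply: hpos; rewrite mem_head.
  split; [exact: bigmin_pos | exact: bigmin_le].
have hST : #|T :\: S| = #|S :\: T|.
  apply/eqP; rewrite -(eqn_add2l #|S :&: T|) cardsID setIC cardsID hS //.
have k0 : (0 < #|S :\: T|)%N by apply/card_gt0P; exists a; rewrite !inE aS -ltnNge ai.
set k := #|S :\: T| in hST k0.
have b1 : `|\prod_(j in S :\: T) Z (val j)| <= m ^+ k.
  rewrite normr_prod -prodr_const; apply: ler_prod => j; rewrite !inE -ltnNge => /andP[jT _].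
  by rewrite normr_ge0 /= hsort // -ltnS prednK.
have b2 : M ^+ k <= `|\prod_(j in T :\: S) Z (val j)|.
  rewrite normr_prod -hST -prodr_const; apply: ler_prod => j; rewrite !inE => /andP[_ jT].
  by rewrite ltW //= hsort.
have b3 : `|\prod_(j in S) Z (val j)| * M ^+ k <= m ^+ k * `|\prod_(j in T) Z (val j)|.
  rewrite [in X in X <= _](big_setID T) [in X in _ <= X](big_setID S) /= setIC !normrM.
  rewrite -mulrA mulrCA [in X in _ <= X]mulrCA.
  by rewrite mulrCA ler_wpM2l // ler_pM // exprn_ge0 // ltW.
set q := m / M.
have q0 : 0 <= q by rewrite divr_ge0 // ltW.
have q1 : q <= 1 by rewrite ler_pdivrMr // mul1r ltW.
have b4 : `|\prod_(j in S) Z (val j)| <= q ^+ k * `|\prod_(j in T) Z (val j)|.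
  by rewrite expr_div_n mulrAC ler_pdivlMr ?exprn_gt0 //; exact: b3.
have b5 : q ^+ k <= (min_ratio d Z)^-1.
  apply: (@le_trans _ _ q).
    by rewrite -(prednK k0) exprS -[X in _ <= X]mulr1 ler_wpM2l // exprn_ile1.
  by rewrite /q -invf_div lef_pV2 // posrE divr_gt0.
apply: le_trans b4 _; by rewrite ler_wpM2r.
Qed.

Lemma ratios_pos (C : numClosedFieldType) (d : nat) (Z : nat -> C)
  (hnz : forall j, (j < d)%N -> Z j != 0) :
  forall x, x \in jump_ratios d Z -> 0 < x.
Proof.
  move=> x /mapP [j]; rewrite mem_filter mem_iota => /andP[hlt /andP[_ hj]] ->.
  have jd : (j < d)%N by rewrite add0n in hj; exact: leq_trans hj (leq_pred _).
  rewrite divr_gt0 // ?normr_gt0 ?hnz //.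
  by move: hj; rewrite add0n ltn_predRL.
Qed.

Lemma minR_ge0 (C : numClosedFieldType) (d : nat) (Z : nat -> C)
  (hnz : forall j, (j < d)%N -> Z j != 0) : 0 <= min_ratio d Z.
Proof.
rewrite /min_ratio; move: (@ratios_pos C d Z hnz).
case: (jump_ratios d Z) => [|y s] hpos /=; first by rewrite big_nil.
have y0 : 0 < y by apply: hpos; rewrite mem_head.
by apply: ltW; apply: bigmin_pos.
Qed.

Theorem mainTheorem3 (C : numClosedFieldType) (d : nat) (Z : nat -> C)
  (hnz : forall j, (j < d)%N -> Z j != 0)
  (hsort : forall j k, (j <= k)%N -> (k < d)%N -> `|Z j| <= `|Z k|)
  (hnot : exists j k, [/\ (j < d)%N, (k < d)%N & `|Z j| != `|Z k|]) :
  forall i : nat, (i <= d)%N -> jump_index d Z i ->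
  exists c : C,
    [/\ elem_sym d Z (d - i) = (\prod_(i <= j < d) Z j) * (1 + c),
        `|c| <= ('C(d, i).-1)%:R / min_ratio d Z
      & ('C(d, i).-1)%:R / min_ratio d Z <= 2 ^+ d / min_ratio d Z].
Proof.
move=> i hi hji.
set T := [set j : 'I_d | (i <= j)%N].
have cardT : #|T| = (d - i)%N.
  have -> : #|T| = #|[pred j : 'I_d | (i <= j)%N]| by apply: eq_card => j; rewrite inE.
  rewrite -sum1_card; transitivity (\sum_(i <= j < d) 1)%N.
    by rewrite big_geq_mkord; apply: eq_bigl => j.
  by rewrite sum_nat_const_nat muln1.
have prodT : \prod_(i <= j < d) Z j = \prod_(j in T) Z (val j).
  by rewrite big_geq_mkord; apply: eq_bigl => j; rewrite inE.
set PT := \prod_(j in T) Z (val j) in prodT *.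
have PT0 : PT != 0 by apply/prodf_neq0 => j _; apply: hnz; exact: ltn_ord j.
rewrite /elem_sym (bigD1 T) /=; last by rewrite cardT.
set Rest := \sum_(S | _) _.
have hR := @minR_ge0 C d Z hnz.
exists (Rest / PT); split.
- by rewrite prodT mulrDr mulr1 mulrCA divff // mulr1.
- rewrite normf_div ler_pdivrMr ?normr_gt0 //.
  apply: le_trans (ler_norm_sum _ _ _) _.
  apply: (@le_trans _ _ (\sum_(S : {set 'I_d} | (#|S| == (d-i)%N) && (S != T)) (min_ratio d Z)^-1 * `|PT|)).
    apply: ler_sum => S /andP[/eqP hS hne]; apply: key => //; by rewrite hS cardT.
  rewrite sumr_const -[X in X <= _]mulr_natl mulrA ler_wpM2r ?normr_ge0 // ler_wpM2r ?invr_ge0 // ler_nat.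
  have := cardD1 T [set S : {set 'I_d} | #|S| == (d-i)%N].
  rewrite card_draws card_ord bin_sub // inE cardT eqxx add1n => ->.
  rewrite -pred_Sn; apply: eq_leq; apply: eq_card => S; rewrite !inE andbC.
  exact: erefl.
- apply: ler_wpM2r; first by rewrite invr_ge0.
  rewrite -natrX ler_nat.
  exact: leq_trans (leq_pred _) (bin_le_exp d i).
Qed.
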